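(* Let $P^0_0,\dots,P^0_3\in\{z=0\}$ and $P^1_0,\dots,P^1_3\in\{z=1\}$ be points in $\mathbb{R}^3$, and for $u\in[0,1]$ set $P^u_j=(1-u)P^0_j+uP^1_j$ (viewed as points of the plane $\{z=u\}\cong\mathbb{R}^2$). Assume $$J:=\min_{0\le j\le3,\;u\in[0,1]}\bigl[\overrightarrow{P^u_jP^u_{j+1}},\overrightarrow{P^u_jP^u_{j-1}}\bigr]>0$$ (indices mod $4$, $[v,w]:=\det(v,w)$ for planar vectors). For $u\in\{0,1\}$ and $s,t\in[0,1]$ let $v^u(t)=(1-t)\overrightarrow{P^u_0P^u_1}+t\overrightarrow{P^u_3P^u_2}$, $w^u(s)=(1-s)\overrightarrow{P^u_0P^u_3}+s\overrightarrow{P^u_1P^u_2}$, $Q^u(s,t)=P^u_0+s\,v^u(0)+t\,w^u(s)$. Then the map $B\colon[0,1]^3\to\mathbb{R}^3$, $B(s,t,u)=(1-u)Q^0(s,t)+uQ^1(s,t)$, is bi-Lipschitz onto its image. *)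

(* Defs.v *)
From Stdlib Require Import Reals Lra.
Open Scope R_scope.

Definition V3 := (R * R * R)%type.
Definition vx (p : V3) : R := fst (fst p).
Definition vy (p : V3) : R := snd (fst p).
Definition vz (p : V3) : R := snd p.

Definition vadd (p q : V3) : V3 := (vx p + vx q, vy p + vy q, vz p + vz q).
Definition vsub (p q : V3) : V3 := (vx p - vx q, vy p - vy q, vz p - vz q).
Definition vscale (a : R) (p : V3) : V3 := (a * vx p, a * vy p, a * vz p).

Definition vnorm (p : V3) : R := sqrt (vx p ^ 2 + vy p ^ 2 + vz p ^ 2).

Definition arrow (p q : V3) : V3 := vsub q p.

(* [v, w] = det(v, w) for planar vectors: computed on the (x, y)-components
   (all vectors considered lie in horizontal planes {z = u}). *)
Definition det2 (v w : V3) : R := vx v * vy w - vy v * vx w.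

Definition Pu (P0 P1 : nat -> V3) (u : R) (j : nat) : V3 :=
  vadd (vscale (1 - u) (P0 j)) (vscale u (P1 j)).

Definition vfun (P : nat -> V3) (t : R) : V3 :=
  vadd (vscale (1 - t) (arrow (P 0%nat) (P 1%nat))) (vscale t (arrow (P 3%nat) (P 2%nat))).
Definition wfun (P : nat -> V3) (s : R) : V3 :=
  vadd (vscale (1 - s) (arrow (P 0%nat) (P 3%nat))) (vscale s (arrow (P 1%nat) (P 2%nat))).
Definition Qfun (P : nat -> V3) (s t : R) : V3 :=
  vadd (vadd (P 0%nat) (vscale s (vfun P 0))) (vscale t (wfun P s)).

Definition Bmap (P0 P1 : nat -> V3) (s t u : R) : V3 :=
  vadd (vscale (1 - u) (Qfun P0 s t)) (vscale u (Qfun P1 s t)).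

Definition in01 (x : R) : Prop := 0 <= x <= 1.

(* Main.v *)
Require Import Defs.
From Stdlib Require Import Reals Lra Arith Lia.
Open Scope R_scope.

Lemma core (J M ds dt du v1 v2 w1 w2 h1 h2 : R) :
 0<J -> 0<M -> J <= v1*w2 - v2*w1 -> v1^2+v2^2 <= M -> w1^2+w2^2 <= M -> h1^2+h2^2 <= M ->
 ds^2+dt^2+du^2 <= ((4*M+4*M^2)/(J^2)+1) *
   ((ds*v1+dt*w1+du*h1)^2+(ds*v2+dt*w2+du*h2)^2+du^2) /\
 (ds*v1+dt*w1+du*h1)^2+(ds*v2+dt*w2+du*h2)^2+du^2 <= (4*M+1)*(ds^2+dt^2+du^2).
Proof.
  intros HJ HM Hd Hv Hw Hh.
  set (D1 := ds*v1+dt*w1+du*h1). set (D2 := ds*v2+dt*w2+du*h2).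
  set (E1 := ds*v1+dt*w1). set (E2 := ds*v2+dt*w2).
  set (det := v1*w2 - v2*w1).
  assert (Hdet2 : J^2 <= det^2).
  { assert (0 <= (det-J)*(det+J)) by (apply Rmult_le_pos; unfold det; lra). nra. }
  assert (L1 : (E1*w2 - E2*w1)^2 <= (E1^2+E2^2)*(w1^2+w2^2)).
  { pose proof (pow2_ge_0 (E1*w1+E2*w2)).
    assert ((E1*w2 - E2*w1)^2 + (E1*w1+E2*w2)^2 = (E1^2+E2^2)*(w1^2+w2^2)) by ring. lra. }
  assert (L2 : (v1*E2 - v2*E1)^2 <= (E1^2+E2^2)*(v1^2+v2^2)).
  { pose proof (pow2_ge_0 (E1*v1+E2*v2)).
    assert ((v1*E2 - v2*E1)^2 + (E1*v1+E2*v2)^2 = (E1^2+E2^2)*(v1^2+v2^2)) by ring. lra. }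
  assert (I1 : E1*w2 - E2*w1 = ds*det) by (unfold E1,E2,det; ring).
  assert (I2 : v1*E2 - v2*E1 = dt*det) by (unfold E1,E2,det; ring).
  rewrite I1 in L1. rewrite I2 in L2.
  assert (HE0 : 0 <= E1^2+E2^2) by nra.
  assert (A1 : ds^2*J^2 <= (E1^2+E2^2)*M).
  { assert (ds^2*J^2 <= ds^2*det^2).
    { apply Rmult_le_compat_l; nra. }
    assert ((E1^2+E2^2)*(w1^2+w2^2) <= (E1^2+E2^2)*M) by (apply Rmult_le_compat_l; lra).
    nra. }
  assert (A2 : dt^2*J^2 <= (E1^2+E2^2)*M).
  { assert (dt^2*J^2 <= dt^2*det^2).
    { apply Rmult_le_compat_l; nra. }
    assert ((E1^2+E2^2)*(v1^2+v2^2) <= (E1^2+E2^2)*M) by (apply Rmult_le_compat_l; lra).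
    nra. }
  assert (HE : E1^2+E2^2 <= 2*(D1^2+D2^2) + 2*du^2*M).
  { assert (e1 : E1 = D1 - du*h1) by (unfold E1, D1; ring).
    assert (e2 : E2 = D2 - du*h2) by (unfold E2, D2; ring).
    rewrite e1, e2.
    pose proof (pow2_ge_0 (D1 + du*h1)).
    pose proof (pow2_ge_0 (D2 + du*h2)).
    assert (du^2*(h1^2+h2^2) <= du^2*M) by (apply Rmult_le_compat_l; nra).
    nra. }
  assert (HJ2 : 0 < J^2) by nra.
  split.
  - assert (B : (ds^2+dt^2)*J^2 <= (4*M+4*M^2)*(D1^2+D2^2+du^2)).
    { assert ((E1^2+E2^2)*M <= (2*(D1^2+D2^2) + 2*du^2*M)*M) by (apply Rmult_le_compat_r; lra).
      assert (0 <= M*(D1^2+D2^2)) by nra.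
      assert (0 <= M*M*(D1^2+D2^2)) by nra.
      assert (0 <= M*du^2) by nra.
      nra. }
    assert (B2 : ds^2+dt^2 <= (4*M+4*M^2)/(J^2)*(D1^2+D2^2+du^2)).
    { unfold Rdiv. rewrite Rmult_assoc, (Rmult_comm (/ J^2)), <- Rmult_assoc.
      apply Rmult_le_reg_r with (J^2); [lra|].
      rewrite Rmult_assoc, Rinv_l by lra. lra. }
    assert (0 <= D1^2 + D2^2) by nra.
    nra.
  - assert (D1^2 <= 3*(ds^2*v1^2+dt^2*w1^2+du^2*h1^2)).
    { pose proof (pow2_ge_0 (ds*v1-dt*w1)). pose proof (pow2_ge_0 (ds*v1-du*h1)).
      pose proof (pow2_ge_0 (dt*w1-du*h1)). unfold D1. nra. }
    assert (D2^2 <= 3*(ds^2*v2^2+dt^2*w2^2+du^2*h2^2)).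
    { pose proof (pow2_ge_0 (ds*v2-dt*w2)). pose proof (pow2_ge_0 (ds*v2-du*h2)).
      pose proof (pow2_ge_0 (dt*w2-du*h2)). unfold D2. nra. }
    assert (ds^2*(v1^2+v2^2) <= ds^2*M) by (apply Rmult_le_compat_l; nra).
    assert (dt^2*(w1^2+w2^2) <= dt^2*M) by (apply Rmult_le_compat_l; nra).
    assert (du^2*(h1^2+h2^2) <= du^2*M) by (apply Rmult_le_compat_l; nra).
    assert (0 <= M*(ds^2+dt^2+du^2)) by nra.
    nra.
Qed.

Lemma vx_add p q : vx (vadd p q) = vx p + vx q. Proof. reflexivity. Qed.
Lemma vy_add p q : vy (vadd p q) = vy p + vy q. Proof. reflexivity. Qed.
Lemma vz_add p q : vz (vadd p q) = vz p + vz q. Proof. reflexivity. Qed.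
Lemma vx_sub p q : vx (vsub p q) = vx p - vx q. Proof. reflexivity. Qed.
Lemma vy_sub p q : vy (vsub p q) = vy p - vy q. Proof. reflexivity. Qed.
Lemma vz_sub p q : vz (vsub p q) = vz p - vz q. Proof. reflexivity. Qed.
Lemma vx_sc a p : vx (vscale a p) = a * vx p. Proof. reflexivity. Qed.
Lemma vy_sc a p : vy (vscale a p) = a * vy p. Proof. reflexivity. Qed.
Lemma vz_sc a p : vz (vscale a p) = a * vz p. Proof. reflexivity. Qed.
Lemma vx_t a b c : vx (a,b,c) = a. Proof. reflexivity. Qed.
Lemma vy_t a b c : vy (a,b,c) = b. Proof. reflexivity. Qed.
Lemma vz_t a b c : vz (a,b,c) = c. Proof. reflexivity. Qed.
#[local] Hint Rewrite vx_add vy_add vz_add vx_sub vy_sub vz_sub vx_sc vy_sc vz_sc vx_t vy_t vz_t : vec.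

Definition Gq (p : nat -> R) (s t : R) : R :=
  (1-s)*(1-t)*p 0%nat + s*(1-t)*p 1%nat + s*t*p 2%nat + (1-s)*t*p 3%nat.

Lemma Bx P0 P1 s t u : vx (Bmap P0 P1 s t u) =
  Gq (fun j => (1-u)*vx (P0 j) + u*vx (P1 j)) s t.
Proof. unfold Bmap, Qfun, vfun, wfun, arrow, Gq. autorewrite with vec. ring. Qed.
Lemma By P0 P1 s t u : vy (Bmap P0 P1 s t u) =
  Gq (fun j => (1-u)*vy (P0 j) + u*vy (P1 j)) s t.
Proof. unfold Bmap, Qfun, vfun, wfun, arrow, Gq. autorewrite with vec. ring. Qed.
Lemma Bz P0 P1 s t u :
  (forall j : nat, (j < 4)%nat -> vz (P0 j) = 0 /\ vz (P1 j) = 1) ->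
  vz (Bmap P0 P1 s t u) = u.
Proof.
  intros H. unfold Bmap, Qfun, vfun, wfun, arrow. autorewrite with vec.
  destruct (H 0%nat ltac:(lia)) as [a0 b0]. destruct (H 1%nat ltac:(lia)) as [a1 b1].
  destruct (H 2%nat ltac:(lia)) as [a2 b2]. destruct (H 3%nat ltac:(lia)) as [a3 b3].
  rewrite a0,b0,a1,b1,a2,b2,a3,b3. ring.
Qed.

Lemma detJ P0 P1 (u : R) j :
  det2 (arrow (Pu P0 P1 u j) (Pu P0 P1 u ((j + 1) mod 4)))
       (arrow (Pu P0 P1 u j) (Pu P0 P1 u ((j + 3) mod 4))) =
  let px k := (1-u)*vx (P0 k) + u*vx (P1 k) in
  let py k := (1-u)*vy (P0 k) + u*vy (P1 k) in
  (px ((j+1) mod 4)%nat - px j) * (py ((j+3) mod 4)%nat - py j)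
  - (py ((j+1) mod 4)%nat - py j) * (px ((j+3) mod 4)%nat - px j).
Proof. unfold det2, arrow, Pu. autorewrite with vec. reflexivity. Qed.

Lemma cc S a b x : -S<=a<=S -> -S<=b<=S -> 0<=x<=1 -> -S <= (1-x)*a+x*b <= S.
Proof. intros. split; nra. Qed.
Lemma sqb S c : -S<=c<=S -> c^2 <= S^2.
Proof. intros. nra. Qed.
Lemma abs2 c : -Rabs c <= c <= Rabs c /\ 0 <= Rabs c.
Proof.
  split; [split|apply Rabs_pos]; [|apply Rle_abs].
  pose proof (Rle_abs (-c)) as H. rewrite Rabs_Ropp in H. lra.
Qed.
Lemma sqfin a b K : 0<=K -> a <= K*b -> sqrt a <= sqrt K * sqrt b.
Proof. intros. rewrite <- sqrt_mult_alt by lra. apply sqrt_le_1_alt. lra. Qed.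

Theorem lemma4p2 (P0 P1 : nat -> V3) :
  (forall j : nat, (j < 4)%nat -> vz (P0 j) = 0 /\ vz (P1 j) = 1) ->
  (exists J : R, 0 < J /\
     forall (j : nat) (u : R), (j < 4)%nat -> in01 u ->
       J <= det2 (arrow (Pu P0 P1 u j) (Pu P0 P1 u ((j + 1) mod 4)))
                 (arrow (Pu P0 P1 u j) (Pu P0 P1 u ((j + 3) mod 4)))) ->
  exists L : R, 0 < L /\
    forall s t u s' t' u' : R,
      in01 s -> in01 t -> in01 u -> in01 s' -> in01 t' -> in01 u' ->
      let d := vnorm (vsub (s, t, u) (s', t', u')) in
      let dB := vnorm (vsub (Bmap P0 P1 s t u) (Bmap P0 P1 s' t' u')) in
      d <= L * dB /\ dB <= L * d.
Proof.
  intros Hz [J [HJ Hdet]].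
  pose (S := 1 + (Rabs (vx (P0 0%nat)) + Rabs (vy (P0 0%nat)) + Rabs (vx (P1 0%nat)) + Rabs (vy (P1 0%nat)))
             + (Rabs (vx (P0 1%nat)) + Rabs (vy (P0 1%nat)) + Rabs (vx (P1 1%nat)) + Rabs (vy (P1 1%nat)))
             + (Rabs (vx (P0 2%nat)) + Rabs (vy (P0 2%nat)) + Rabs (vx (P1 2%nat)) + Rabs (vy (P1 2%nat)))
             + (Rabs (vx (P0 3%nat)) + Rabs (vy (P0 3%nat)) + Rabs (vx (P1 3%nat)) + Rabs (vy (P1 3%nat)))).
  pose proof (abs2 (vx (P0 0%nat))). pose proof (abs2 (vy (P0 0%nat))).
  pose proof (abs2 (vx (P1 0%nat))). pose proof (abs2 (vy (P1 0%nat))).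
  pose proof (abs2 (vx (P0 1%nat))). pose proof (abs2 (vy (P0 1%nat))).
  pose proof (abs2 (vx (P1 1%nat))). pose proof (abs2 (vy (P1 1%nat))).
  pose proof (abs2 (vx (P0 2%nat))). pose proof (abs2 (vy (P0 2%nat))).
  pose proof (abs2 (vx (P1 2%nat))). pose proof (abs2 (vy (P1 2%nat))).
  pose proof (abs2 (vx (P0 3%nat))). pose proof (abs2 (vy (P0 3%nat))).
  pose proof (abs2 (vx (P1 3%nat))). pose proof (abs2 (vy (P1 3%nat))).
  assert (HS : 1 <= S) by (unfold S; lra).
  pose (M := 2 * S^2).
  assert (HM : 0 < M) by (unfold M; nra).
  pose (Kl := (4*M+4*M^2)/(J^2)+1). pose (Ku := 4*M+1).
  assert (HKl : 0 < Kl).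
  { unfold Kl. assert (0 < (4*M+4*M^2)/(J^2)); [|lra].
    apply Rdiv_lt_0_compat; nra. }
  assert (HKu : 0 < Ku) by (unfold Ku; lra).
  exists (sqrt (Kl + Ku)). split; [apply sqrt_lt_R0; lra|].
  intros s t u s' t' u' Hs Ht Hu Hs' Ht' Hu'.
  unfold in01 in *.
  cbv zeta. unfold vnorm. autorewrite with vec.
  rewrite !(Bz P0 P1 _ _ _ Hz), !Bx, !By.
  pose (sb := (s+s')/2). pose (tb := (t+t')/2).
  assert (Hsb : 0 <= sb <= 1) by (unfold sb; lra).
  assert (Htb : 0 <= tb <= 1) by (unfold tb; lra).
  pose (px := fun k => (1-u)*vx (P0 k) + u*vx (P1 k)).
  pose (py := fun k => (1-u)*vy (P0 k) + u*vy (P1 k)).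
  pose (v1 := (1-tb)*(px 1%nat - px 0%nat) + tb*(px 2%nat - px 3%nat)).
  pose (v2 := (1-tb)*(py 1%nat - py 0%nat) + tb*(py 2%nat - py 3%nat)).
  pose (w1 := (1-sb)*(px 3%nat - px 0%nat) + sb*(px 2%nat - px 1%nat)).
  pose (w2 := (1-sb)*(py 3%nat - py 0%nat) + sb*(py 2%nat - py 1%nat)).
  pose (h1 := Gq (fun k => vx (P1 k) - vx (P0 k)) s' t').
  pose (h2 := Gq (fun k => vy (P1 k) - vy (P0 k)) s' t').
  assert (Ex : Gq (fun j => (1-u)*vx (P0 j) + u*vx (P1 j)) s t
             - Gq (fun j => (1-u')*vx (P0 j) + u'*vx (P1 j)) s' t'
             = (s-s')*v1 + (t-t')*w1 + (u-u')*h1).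
  { unfold v1, w1, h1, px, sb, tb, Gq. field. }
  assert (Ey : Gq (fun j => (1-u)*vy (P0 j) + u*vy (P1 j)) s t
             - Gq (fun j => (1-u')*vy (P0 j) + u'*vy (P1 j)) s' t'
             = (s-s')*v2 + (t-t')*w2 + (u-u')*h2).
  { unfold v2, w2, h2, py, sb, tb, Gq. field. }
  rewrite Ex, Ey.
  assert (Hd : J <= v1*w2 - v2*w1).
  { pose proof (Hdet 0%nat u ltac:(lia) Hu) as D0.
    pose proof (Hdet 1%nat u ltac:(lia) Hu) as D1.
    pose proof (Hdet 2%nat u ltac:(lia) Hu) as D2.
    pose proof (Hdet 3%nat u ltac:(lia) Hu) as D3.
    rewrite detJ in D0, D1, D2, D3. cbv zeta in D0, D1, D2, D3. simpl Nat.modulo in D0, D1, D2, D3.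
    fold px py in D0, D1, D2, D3.
    set (d0 := (px 1%nat - px 0%nat) * (py 3%nat - py 0%nat) - (py 1%nat - py 0%nat) * (px 3%nat - px 0%nat)) in D0.
    set (d1 := (px 2%nat - px 1%nat) * (py 0%nat - py 1%nat) - (py 2%nat - py 1%nat) * (px 0%nat - px 1%nat)) in D1.
    set (d2 := (px 3%nat - px 2%nat) * (py 1%nat - py 2%nat) - (py 3%nat - py 2%nat) * (px 1%nat - px 2%nat)) in D2.
    set (d3 := (px 0%nat - px 3%nat) * (py 2%nat - py 3%nat) - (py 0%nat - py 3%nat) * (px 2%nat - px 3%nat)) in D3.
    assert (Id : v1*w2 - v2*w1 = (1-sb)*(1-tb)*d0 + sb*(1-tb)*d1 + sb*tb*d2 + (1-sb)*tb*d3).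
    { unfold v1, v2, w1, w2, d0, d1, d2, d3. ring. }
    rewrite Id.
    assert (0 <= (1-sb)*(1-tb)*(d0-J)) by (repeat apply Rmult_le_pos; lra).
    assert (0 <= sb*(1-tb)*(d1-J)) by (repeat apply Rmult_le_pos; lra).
    assert (0 <= sb*tb*(d2-J)) by (repeat apply Rmult_le_pos; lra).
    assert (0 <= (1-sb)*tb*(d3-J)) by (repeat apply Rmult_le_pos; lra).
    nra. }
  assert (Bv1 : -S <= v1 <= S).
  { replace v1 with ((1-tb)*((1-u)*(vx (P0 1%nat) - vx (P0 0%nat)) + u*(vx (P1 1%nat) - vx (P1 0%nat)))
                     + tb*((1-u)*(vx (P0 2%nat) - vx (P0 3%nat)) + u*(vx (P1 2%nat) - vx (P1 3%nat))))
      by (unfold v1, px; ring).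
    apply cc; [apply cc; unfold S; lra | apply cc; unfold S; lra | lra]. }
  assert (Bv2 : -S <= v2 <= S).
  { replace v2 with ((1-tb)*((1-u)*(vy (P0 1%nat) - vy (P0 0%nat)) + u*(vy (P1 1%nat) - vy (P1 0%nat)))
                     + tb*((1-u)*(vy (P0 2%nat) - vy (P0 3%nat)) + u*(vy (P1 2%nat) - vy (P1 3%nat))))
      by (unfold v2, py; ring).
    apply cc; [apply cc; unfold S; lra | apply cc; unfold S; lra | lra]. }
  assert (Bw1 : -S <= w1 <= S).
  { replace w1 with ((1-sb)*((1-u)*(vx (P0 3%nat) - vx (P0 0%nat)) + u*(vx (P1 3%nat) - vx (P1 0%nat)))
                     + sb*((1-u)*(vx (P0 2%nat) - vx (P0 1%nat)) + u*(vx (P1 2%nat) - vx (P1 1%nat))))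
      by (unfold w1, px; ring).
    apply cc; [apply cc; unfold S; lra | apply cc; unfold S; lra | lra]. }
  assert (Bw2 : -S <= w2 <= S).
  { replace w2 with ((1-sb)*((1-u)*(vy (P0 3%nat) - vy (P0 0%nat)) + u*(vy (P1 3%nat) - vy (P1 0%nat)))
                     + sb*((1-u)*(vy (P0 2%nat) - vy (P0 1%nat)) + u*(vy (P1 2%nat) - vy (P1 1%nat))))
      by (unfold w2, py; ring).
    apply cc; [apply cc; unfold S; lra | apply cc; unfold S; lra | lra]. }
  assert (Bh1 : -S <= h1 <= S).
  { replace h1 with ((1-t')*((1-s')*(vx (P1 0%nat) - vx (P0 0%nat)) + s'*(vx (P1 1%nat) - vx (P0 1%nat)))
                     + t'*((1-s')*(vx (P1 3%nat) - vx (P0 3%nat)) + s'*(vx (P1 2%nat) - vx (P0 2%nat))))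
      by (unfold h1, Gq; ring).
    apply cc; [apply cc; unfold S; lra | apply cc; unfold S; lra | lra]. }
  assert (Bh2 : -S <= h2 <= S).
  { replace h2 with ((1-t')*((1-s')*(vy (P1 0%nat) - vy (P0 0%nat)) + s'*(vy (P1 1%nat) - vy (P0 1%nat)))
                     + t'*((1-s')*(vy (P1 3%nat) - vy (P0 3%nat)) + s'*(vy (P1 2%nat) - vy (P0 2%nat))))
      by (unfold h2, Gq; ring).
    apply cc; [apply cc; unfold S; lra | apply cc; unfold S; lra | lra]. }
  apply sqb in Bv1, Bv2, Bw1, Bw2, Bh1, Bh2.
  destruct (core J M (s-s') (t-t') (u-u') v1 v2 w1 w2 h1 h2 HJ HM Hd
              ltac:(unfold M; lra) ltac:(unfold M; lra) ltac:(unfold M; lra)) as [C1 C2].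
  fold Kl in C1. fold Ku in C2.
  set (a := (s-s')^2 + (t-t')^2 + (u-u')^2) in *.
  set (b := ((s - s') * v1 + (t - t') * w1 + (u - u') * h1) ^ 2 +
            ((s - s') * v2 + (t - t') * w2 + (u - u') * h2) ^ 2 + (u - u') ^ 2) in *.
  assert (0 <= a) by (unfold a; pose proof (pow2_ge_0 (s-s')); pose proof (pow2_ge_0 (t-t')); pose proof (pow2_ge_0 (u-u')); lra).
  assert (0 <= b) by (unfold b; pose proof (pow2_ge_0 ((s - s') * v1 + (t - t') * w1 + (u - u') * h1)); pose proof (pow2_ge_0 ((s - s') * v2 + (t - t') * w2 + (u - u') * h2)); pose proof (pow2_ge_0 (u-u')); lra).
  split; apply sqfin; try lra.
  - assert (Kl*b <= (Kl+Ku)*b) by (apply Rmult_le_compat_r; lra). lra.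
  - assert (Ku*a <= (Kl+Ku)*a) by (apply Rmult_le_compat_r; lra). lra.
Qed.
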